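(* Let $\phi(x,z)$ be an associate of the additive formal group $F(x,y)=x+y$ with $\phi(x,z)\ne x$. Then $f(\phi(x,z),x)\ne0$ for every nonzero $f(x_1,x)\in\mathbb{C}((x_1,x))$.
   Context: An associate of $F(x,y)=x+y$ is $\phi(x,z)\in\mathbb{C}((x))[[z]]$ with $\phi(x,0)=x$ and $\phi(\phi(x,x_2),x_0)=\phi(x,x_0+x_2)$. $\mathbb{C}((x_1,x))=\mathbb{C}[[x_1,x]][x_1^{-1},x^{-1}]$. For $f(x_1,x)=\sum_{m,n\ge k}a(m,n)x_1^mx^n$, $f(\phi(x,z),x):=\sum_{m,n}a(m,n)\phi(x,z)^mx^n\in\mathbb{C}((x))[[z]]$, where $\phi(x,z)^m$ for $m<0$ is the inverse power in $\mathbb{C}((x))[[z]]$ (writing $\phi(x,z)=x+zA$, $\phi^m=\sum_{i\ge0}\binom mi x^{m-i}z^iA^i$). *)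

(* Defs.v *)
(* Formal series are represented by explicit coefficient data
   together with an explicit lower bound on the exponents. *)
From HB Require Import structures.
From mathcomp Require Import all_boot all_order all_algebra.
From mathcomp Require Import complex.
From mathcomp Require Import reals.

Set Implicit Arguments.
Unset Strict Implicit.
Unset Printing Implicit Defensive.

Import Order.TTheory GRing.Theory Num.Theory.
Local Open Scope ring_scope.

Section FormalSeries.
Variable K : comNzRingType.

(* ---------- Laurent series in x :  C((x)) ----------
   A pair (N, c) represents  sum_{n >= 0} c n * x^(N + n). *)
Definition LS := (int * (nat -> K))%type.

Definition lc (s : LS) (e : int) : K :=
  match (e - s.1)%R with Posz n => s.2 n | Negz _ => 0 end.

Definition ls_zero : LS := (0%Z, fun _ => 0).
Definition ls_one : LS := (0%Z, fun n => (n == 0%N)%:R).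
Definition ls_xpow (m : int) : LS := (m, fun n => (n == 0%N)%:R).
Definition ls_add (a b : LS) : LS :=
  let N := Order.min a.1 b.1 in (N, fun n => lc a (N + n%:Z) + lc b (N + n%:Z)).
Definition ls_scale (c : K) (a : LS) : LS := (a.1, fun n => c * a.2 n).
Definition ls_mul (a b : LS) : LS :=
  ((a.1 + b.1)%R, fun n => \sum_(k < n.+1) a.2 k * b.2 (n - k)%N).

(* ---------- C((x))[[z]] ----------
   P : nat -> LS represents sum_i (P i) z^i. *)
Definition LZ := (nat -> LS)%type.

Definition lz_one : LZ := fun i => if i == 0%N then ls_one else ls_zero.
Definition lz_mul (P Q : LZ) : LZ :=
  fun i => \big[ls_add/ls_zero]_(j < i.+1) ls_mul (P j) (Q (i - j)%N).
Fixpoint lz_pow (P : LZ) (k : nat) : LZ :=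
  if k is k'.+1 then lz_mul P (lz_pow P k') else lz_one.

Definition binz (m : int) (k : nat) : int :=
  match m with
  | Posz p => ('C(p, k))%:Z
  | Negz p => ((-1) ^+ k * ('C(p + k, k))%:Z)%R
  end.

(* For phi(x,z) = x + z A  (A i := phi (i+1)), the power phi^m (m : int),
   defined as in the paper by  phi^m = sum_k binom(m,k) x^(m-k) z^k A^k;
   phipow phi m i is its coefficient of z^i. *)
Definition shiftA (phi : LZ) : LZ := fun i => phi i.+1.

Definition phipow (phi : LZ) (m : int) (i : nat) : LS :=
  \big[ls_add/ls_zero]_(k < i.+1)
     ls_scale (binz m k)%:~R
       (ls_mul (ls_xpow (m - k%:Z)) (lz_pow (shiftA phi) k (i - k)%N)).

(* A lower bound for the x-exponents of the coefficients (A^k)_(i-k), k <= i;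
   hence every x-exponent occurring in phipow phi m i is >= m - i + lowA phi i. *)
Definition lowA (phi : LZ) (i : nat) : int :=
  \big[Order.min/0%Z]_(k < i.+1) (lz_pow (shiftA phi) k (i - k)%N).1.

(* g(phi(x,z)) for g = (N, c) in C((y)):  coefficient of z^i x^e of
   sum_t c t * phi^(N+t).  Only the terms with N + t <= e + i - lowA phi i
   can contribute, so the (formally infinite) sum is the finite sum below. *)
Definition subst_coef (phi : LZ) (g : LS) (i : nat) (e : int) : K :=
  \sum_(t < (absz (e - g.1 + i%:Z - lowA phi i)%R).+1)
     g.2 t * lc (phipow phi (g.1 + t%:Z) i) e.

(* ---------- C((x1,x)) ----------
   A pair (k, a) represents f(x1,x) = sum_{p,q >= 0} a p q x1^(k+p) x^(k+q),
   i.e. sum_{m,n >= k} a(m,n) x1^m x^n. *)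
Definition LL := (int * (nat -> nat -> K))%type.

Definition LL_nonzero (f : LL) : Prop := exists p q, f.2 p q != 0.

(* f(phi(x,z),x): coefficient of z^i x^e of
   sum_{p,q} a p q phi^(k+p) x^(k+q); only p + q <= e - 2k + i - lowA phi i
   can contribute. *)
Definition fsubst_coef (phi : LZ) (f : LL) (i : nat) (e : int) : K :=
  let B := absz (e - 2%:Z * f.1 + i%:Z - lowA phi i)%R in
  \sum_(p < B.+1) \sum_(q < B.+1)
     f.2 p q * lc (phipow phi (f.1 + p%:Z) i) (e - (f.1 + q%:Z)).

(* phi is an associate of F(x,y) = x + y:
   phi(x,0) = x  and  phi(phi(x,x2),x0) = phi(x,x0+x2) in C((x))[[x2,x0]],
   compared coefficientwise at x2^i x0^j x^e
   (RHS: coefficient of x2^i x0^j in phi_(i+j)(x) (x0+x2)^(i+j)). *)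
Definition associate_add (phi : LZ) : Prop :=
  (forall e, lc (phi 0%N) e = (e == 1%Z)%:R) /\
  (forall (i j : nat) (e : int),
      subst_coef phi (phi j) i e = ('C(i + j, j))%:R * lc (phi (i + j)%N) e).

Definition lz_is_x (phi : LZ) : Prop :=
  forall (i : nat) (e : int), lc (phi i) e = ((i == 0%N) && (e == 1%Z))%:R.

End FormalSeries.

(* Main.v *)
Require Import Defs.
From HB Require Import structures.
From mathcomp Require Import all_boot all_order all_algebra.
From mathcomp Require Import complex reals.
From mathcomp Require Import ring lra zify.
From Stdlib Require Import Classical.
Import GRing.Theory Num.Theory.
Local Open Scope ring_scope.

Module Helpers.
Set Implicit Arguments. Unset Strict Implicit. Unset Printing Implicit Defensive.
Import Order.TTheory.
Section L.
Variable K : comNzRingType.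

Lemma lc_lt (s : LS K) e : e < s.1 -> lc s e = 0.
Proof.
rewrite /lc -subr_lt0; case: (e - s.1) => //= n.
Qed.

Lemma lc_nz (s : LS K) e : lc s e != 0 -> s.1 <= e.
Proof. by apply: contraR; rewrite -ltNge => /lc_lt ->; rewrite eqxx. Qed.

Lemma lc_shift (s : LS K) (t : nat) : lc s (s.1 + t%:Z) = s.2 t.
Proof. by rewrite /lc addrC addKr. Qed.

Lemma lc_zero e : lc (ls_zero K) e = 0.
Proof. by rewrite /lc; case: (e - _). Qed.

Lemma lc_add (a b : LS K) e : lc (ls_add a b) e = lc a e + lc b e.
Proof.
rewrite /ls_add /lc /=.
case E: (e - Num.min a.1 b.1) => [n|n].
  have H : Num.min a.1 b.1 + n%:Z = e by rewrite -E addrC subrK.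
  by rewrite H.
have hN : e < Num.min a.1 b.1 by rewrite -subr_lt0 E.
have ha : e < a.1 by apply: (lt_le_trans hN); rewrite ge_min lexx.
have hb : e < b.1 by apply: (lt_le_trans hN); rewrite ge_min lexx orbT.
by have := lc_lt ha; have := lc_lt hb; rewrite /lc => -> ->; rewrite addr0.
Qed.

Lemma lc_big n (F : 'I_n -> LS K) e :
  lc (\big[@ls_add K/ls_zero K]_(j < n) F j) e = \sum_(j < n) lc (F j) e.
Proof.
exact: (big_morph (fun s => lc s e) (fun a b => lc_add a b e) (lc_zero e)).
Qed.

Lemma lc_scale c (a : LS K) e : lc (ls_scale c a) e = c * lc a e.
Proof. by rewrite /lc /=; case: (e - a.1) => // ?; rewrite mulr0. Qed.

Lemma lc_xpow_mul d (b : LS K) e :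
  lc (ls_mul (ls_xpow K d) b) e = lc b (e - d).
Proof.
rewrite /lc /=.
have -> : e - (d + b.1) = e - d - b.1 by rewrite opprD addrA.
case: (e - d - b.1) => // n.
rewrite big_ord_recl /= mul1r subn0 big1 ?addr0 // => i _.
by rewrite /= mul0r.
Qed.

Definition vanish (s : LS K) (v : int) := forall x, x < v -> lc s x = 0.

Lemma lc_mul_low (a b : LS K) va vb e : vanish a va -> vanish b vb ->
  e < va + vb -> lc (ls_mul a b) e = 0.
Proof.
move=> ha hb he; rewrite /lc /=.
case E: (e - (a.1 + b.1)) => [n|n] //.
apply: big1 => k _.
rewrite -(lc_shift a) -(lc_shift b).
have hk : (k <= n)%N by rewrite -ltnS.
case: (ltP (a.1 + k%:Z) va) => h1; first by rewrite ha // mul0r.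
rewrite hb ?mulr0 //.
have : e = a.1 + b.1 + n%:Z by rewrite -E addrC subrK.
move: h1 he => h1 he He.
have HH : (n - k)%:Z = n%:Z - k%:Z by rewrite subzn.
rewrite HH; lia.
Qed.

Lemma vanish_lc1 (s : LS K) v : vanish s v -> vanish s (Num.max v s.1).
Proof.
move=> h x; rewrite lt_max => /orP[h1|h1]; [exact: h | exact: lc_lt].
Qed.

Lemma lc_mul_lead (a b : LS K) va vb : vanish a va -> vanish b vb ->
  lc (ls_mul a b) (va + vb) = lc a va * lc b vb.
Proof.
move=> ha hb.
case: (ltP va a.1) => h1.
  rewrite (lc_lt h1) mul0r; apply: (lc_mul_low (vanish_lc1 ha) (vanish_lc1 hb)).
  apply: ltr_leD; first by rewrite lt_max h1 orbT.
  by rewrite le_max lexx.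
case: (ltP vb b.1) => h2.
  rewrite (lc_lt h2) mulr0; apply: (lc_mul_low (vanish_lc1 ha) (vanish_lc1 hb)).
  apply: ler_ltD; first by rewrite le_max lexx.
  by rewrite lt_max h2 orbT.
have [s Hs] : exists s : nat, va = a.1 + s%:Z.
  exists `|va - a.1|%N; rewrite gez0_abs ?subr_ge0 //; ring.
have [t Ht] : exists t : nat, vb = b.1 + t%:Z.
  exists `|vb - b.1|%N; rewrite gez0_abs ?subr_ge0 //; ring.
rewrite Hs Ht !lc_shift /lc /=.
have -> : a.1 + s%:Z + (b.1 + t%:Z) - (a.1 + b.1) = (s + t)%N%:Z by rewrite PoszD; ring.
have hs : (s < (s + t).+1)%N by rewrite ltnS leq_addr.
rewrite (bigD1 (Ordinal hs)) //= addKn big1 ?addr0 // => k /eqP hk.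
have hk' : k != s :> nat by apply/eqP => e; apply: hk; apply: val_inj.
case: (ltngtP k s) hk' => // hks _.
  by rewrite -(lc_shift a) ha ?mul0r // Hs ltrD2l ltz_nat.
rewrite -(lc_shift b) hb ?mulr0 // Ht ltrD2l.
have hk2 : (k <= s + t)%N by rewrite -ltnS.
rewrite ltz_nat; lia.
Qed.

Lemma lz_mul0 (P Q : LZ K) e : lc (lz_mul P Q 0) e = lc (ls_mul (P 0%N) (Q 0%N)) e.
Proof. by rewrite /lz_mul lc_big big_ord1. Qed.

Lemma lz_pow0 (P : LZ K) v c : vanish (P 0%N) v -> lc (P 0%N) v = c ->
  forall k : nat, vanish (lz_pow P k 0) (k%:Z * v) /\ lc (lz_pow P k 0) (k%:Z * v) = c ^+ k.
Proof.
move=> hv hc; elim=> [|k [IH1 IH2]].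
  rewrite mul0r /=; split; last by rewrite expr0 /lc /=.
  move=> x hx; rewrite /lc /= subr0; move: hx; case: x => // n; by rewrite ltz_nat.
have -> : k.+1%:Z * v = v + k%:Z * v by rewrite intS mulrDl mul1r.
split.
  move=> x hx /=; rewrite lz_mul0; exact: (lc_mul_low hv IH1).
by rewrite /= lz_mul0 (lc_mul_lead hv IH1) hc IH2 exprS.
Qed.

Lemma lc_phipow (phi : LZ K) m i E : lc (phipow phi m i) E =
  \sum_(k < i.+1) (binz m k)%:~R * lc (lz_pow (shiftA phi) k (i - k)%N) (E - (m - k%:Z)).
Proof.
rewrite /phipow lc_big; apply: eq_bigr => k _.
by rewrite lc_scale lc_xpow_mul.
Qed.

Lemma lowA_le (phi : LZ K) i (k : nat) : (k <= i)%N ->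
  lowA phi i <= (lz_pow (shiftA phi) k (i - k)%N).1.
Proof.
move=> hk; rewrite -ltnS in hk.
exact: (bigmin_le _ (Ordinal hk) (fun k : 'I_i.+1 => (lz_pow (shiftA phi) k (i - k)%N).1)).
Qed.

Lemma diag (F : nat -> nat -> K) B : (forall p q, (B < p + q)%N -> F p q = 0) ->
  \sum_(p < B.+1) \sum_(q < B.+1) F p q = \sum_(n < B.+1) \sum_(p < n.+1) F p (n - p)%N.
Proof.
move=> hF.
transitivity (\sum_(n < B.+1) \sum_(p < B.+1) (if (p <= n)%N then F p (n - p)%N else 0)); last first.
  apply: eq_bigr => n _.
  rewrite (big_ord_widen B.+1 (fun p => F p (n - p)%N)) ?ltnS ?(ltn_ord n) //; last by rewrite -ltnS.
  rewrite [RHS]big_mkcond; apply: eq_bigr => p _; by rewrite ltnS.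
rewrite [RHS]exchange_big /=; apply: eq_bigr => p _.
have hp : (p <= B)%N by rewrite -ltnS.
have E1 : \sum_(q < B.+1) F p q = \sum_(0 <= q < B.+1) F p q by rewrite big_mkord.
have E2 : \sum_(i < B.+1) (if (p <= i)%N then F p (i - p)%N else 0) = \sum_(0 <= i < B.+1) (if (p <= i)%N then F p (i - p)%N else 0) by rewrite big_mkord.
rewrite E1 E2.
rewrite [RHS](big_cat_nat (n := p)) ?leq0n /=; last by rewrite ltnW // ltnS.
rewrite [X in _ = X + _]big1_seq ?add0r; last first.
  by move=> n; rewrite mem_index_iota => /andP[_ hn]; move: hn; rewrite ltnNge => /negbTE ->.
rewrite -{2}(add0n p) big_addn.
rewrite [LHS](big_cat_nat (n := (B.+1 - p)%N)) ?leq0n ?leq_subr //=.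
rewrite [X in _ + X = _]big1_seq ?addr0; last first.
  move=> q; rewrite mem_index_iota /= => /andP[hq _]; apply: hF.
  lia.
apply: congr_big_nat => // q _.
  by rewrite leq_addl addnK.
all: by [].
Qed.

Lemma binz0 m : binz m 0%N = 1.
Proof. by case: m => n /=; rewrite ?addn0 bin0 // expr0 mul1r. Qed.

Lemma binz_nat (n k : nat) : binz n%:Z k = ('C(n, k))%:Z.
Proof. by []. Qed.

Lemma binzS m k : binz (m + 1) k.+1 = binz m k.+1 + binz m k.
Proof.
case: m => n.
  by rewrite -PoszD addn1 /= binS PoszD.
case: n => [|n].
  have -> : Negz 0 + 1 = 0 by [].
  rewrite /= bin0n /= !add0n !binn exprS; ring.
have -> : Negz n.+1 + 1 = Negz n by rewrite !NegzE; ring.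
rewrite /=.
have -> : (n.+1 + k.+1 = (n + k.+1).+1)%N by rewrite addSn.
rewrite binS.
have -> : (n.+1 + k = n + k.+1)%N by rewrite addSn addnS.
rewrite PoszD exprS; ring.
Qed.

Definition Sk (a : nat -> K) (n : nat) (m : int) (k : nat) :=
  \sum_(p < n.+1) a p * (binz (m + p%:Z) k)%:~R.

Lemma Sk_step a n m : (forall k, Sk a n m k = 0) -> forall k, Sk a n (m + 1) k = 0.
Proof.
move=> H [|k].
  rewrite -(H 0%N) /Sk; apply: eq_bigr => p _; by rewrite !binz0.
rewrite -[0](addr0 0) -{1}(H k.+1) -(H k) /Sk -big_split /=.
apply: eq_bigr => p _.
have -> : m + 1 + p%:Z = (m + p%:Z) + 1 by rewrite addrAC.
by rewrite binzS intrD mulrDr.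
Qed.

Lemma Sk_iter a n m : (forall k, Sk a n m k = 0) -> forall j : nat, forall k, Sk a n (m + j%:Z) k = 0.
Proof.
move=> H; elim=> [|j IH]; first by rewrite addr0.
have -> : m + j.+1%:Z = (m + j%:Z) + 1 by rewrite intS; ring.
exact: Sk_step.
Qed.

Lemma Sk_exists a n m p0 : (p0 <= n)%N -> a p0 != 0 -> exists k, Sk a n m k != 0.
Proof.
move=> hp0 ha.
have exP : exists p, (fun p => (p <= n)%N && (a p != 0)) p by exists p0; rewrite hp0 ha.
have ubP : forall p, (fun p => (p <= n)%N && (a p != 0)) p -> (p <= n)%N by move=> p /andP[].
case: (ex_maxnP exP ubP) => pm /andP[hpm hapm] hmax.
case: (classic (exists k, Sk a n m k != 0)) => // hno.
have H k : Sk a n m k = 0.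
  by case: (eqVneq (Sk a n m k) 0) => // hk; case: hno; exists k.
have [c Hc] : exists c : nat, m + (absz m)%:Z = c%:Z.
  case: (m) => t; first by exists (t + t)%N.
  by exists 0%N; rewrite NegzE /=; ring.
have := Sk_iter H (absz m) (c + pm)%N; rewrite Hc /Sk.
have hpm' : (pm < n.+1)%N by [].
rewrite (bigD1 (Ordinal hpm')) //= binn mulr1.
rewrite big1 ?addr0; first by move=> E; move: hapm; rewrite E eqxx.
move=> p /eqP hp.
have hp' : (p : nat) != pm by apply/eqP => e; apply: hp; apply: val_inj.
case: (ltngtP p pm) hp' => // hlt _.
  by rewrite bin_small ?mulr0 // ltn_add2l.
have : ~~ ((p <= n)%N && (a p != 0)).
  by apply/negP => /hmax; rewrite leqNgt hlt.
rewrite -ltnS (ltn_ord p) /= negbK => /eqP ->; by rewrite mul0r.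
Qed.
End L.

Lemma ex_min_nat (P : nat -> Prop) : (exists n, P n) -> exists n, P n /\ forall m, (m < n)%N -> ~ P m.
Proof.
move=> [n Hn].
suff H : forall N n, (n <= N)%N -> P n -> exists n, P n /\ forall m, (m < n)%N -> ~ P m.
  exact: (H n n (leqnn n) Hn).
elim=> [|N IH] k hk Pk.
  exists k; split => // m; move: hk; rewrite leqn0 => /eqP ->; by [].
case: (classic (exists m, (m < k)%N /\ P m)) => [[m [hm Pm]]|hno].
  by apply: (IH m) => //; rewrite -ltnS (leq_trans hm hk).
exists k; split => // m hm Pm; apply: hno; by exists m.
Qed.

Section Main.
Variable R : realType.
Local Notation K := (R[i]).

Lemma valuation (s : LS K) : (exists e, lc s e != 0) -> exists v, vanish s v /\ lc s v != 0.
Proof.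
move=> [e he]; have hle := lc_nz he.
have [t [Pt Hmin]] : exists t, lc s (s.1 + t%:Z) != 0 /\ forall m, (m < t)%N -> ~ (lc s (s.1 + m%:Z) != 0).
  apply: ex_min_nat; exists (absz (e - s.1)).
  rewrite gez0_abs ?subr_ge0 //. by have -> : s.1 + (e - s.1) = e by ring.
exists (s.1 + t%:Z); split => // x hx.
case: (ltP x s.1) => h1; first exact: lc_lt.
have hx' : x = s.1 + (absz (x - s.1))%:Z by rewrite gez0_abs ?subr_ge0 //; ring.
case: (eqVneq (lc s x) 0) => // hne; exfalso.
apply: (Hmin (absz (x - s.1))); last by rewrite -hx'.
rewrite -ltz_nat gez0_abs ?subr_ge0 //; lia.
Qed.

Lemma phi1_nz (phi : LZ K) : associate_add phi -> ~ lz_is_x phi ->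
  exists e, lc (phi 1%N) e != 0.
Proof.
move=> [h0 hass] hnx.
case: (classic (exists e, lc (phi 1%N) e != 0)) => // hno.
have H1 e : lc (phi 1%N) e = 0.
  by case: (eqVneq (lc (phi 1%N) e) 0) => // hk; case: hno; exists e.
exfalso; apply: hnx => r e.
case: (classic (lc (phi r) e = ((r == 0%N) && (e == 1))%:R)) => // hne.
exfalso.
case: r hne => [|r] hne; first by apply: hne; rewrite h0.
case: r hne => [|r] hne; first by apply: hne; rewrite H1.
have hr : lc (phi r.+2) e != 0 by apply/eqP; move: hne => /=.
have := hass r.+1 1%N e.
rewrite /subst_coef big1 => [|t _]; last by rewrite -lc_shift H1 mul0r.
rewrite addn1 bin1 => /esym /eqP; rewrite mulf_eq0 pnatr_eq0 /= (negbTE hr).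
by [].
Qed.

Lemma absz_ge (x : int) : x <= (absz x)%:Z.
Proof. by rewrite abszE ler_norm. Qed.

Theorem main (phi : LZ K) :
  associate_add phi -> ~ lz_is_x phi ->
  forall f : LL K, LL_nonzero f ->
  exists (i : nat) (e : int), fsubst_coef phi f i e != 0.
Proof.
move=> ha hnx f [p0 [q0 hf]].
have [v [hv hc]] := valuation (phi1_nz ha hnx).
have hpow := @lz_pow0 _ (shiftA phi) v _ hv (erefl _).
pose w k n := Sk (fun p => f.2 p (n - p)%N) n f.1 k.
have hex : exists k, exists n, w k n != 0.
  have ha0 : (fun p => f.2 p ((p0+q0) - p)%N) p0 != 0 by rewrite /= addKn.
  have [k hk] := @Sk_exists _ (fun p => f.2 p ((p0+q0) - p)%N) (p0+q0)%N f.1 p0 (leq_addr q0 p0) ha0.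
  by exists k, (p0+q0)%N.
have [i [[n1 hn1] hmin]] := ex_min_nat hex.
have [ns [hns hminn]] := ex_min_nat (P := fun n => w i n != 0) (ex_intro _ n1 hn1).
pose e := (i%:Z * v) + 2%:Z * f.1 + ns%:Z - i%:Z.
exists i, e.
rewrite /fsubst_coef.
set B := absz _.
have hB : e - 2%:Z * f.1 + i%:Z - lowA phi i <= B%:Z by apply: absz_ge.
pose A k := lz_pow (shiftA phi) k (i - k)%N.
pose cc k n := lc (A k) (e - 2%:Z * f.1 - n%:Z + k%:Z).
pose F k p q := f.2 p q * (binz (f.1 + p%:Z) k)%:~R * cc k (p + q)%N.
have E1 : \sum_(p < B.+1) \sum_(q < B.+1) f.2 p q * lc (phipow phi (f.1 + p%:Z) i) (e - (f.1 + q%:Z))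
   = \sum_(k < i.+1) \sum_(n < B.+1) w k n * cc k n.
  transitivity (\sum_(p < B.+1) \sum_(q < B.+1) \sum_(k < i.+1) F k p q).
    apply: eq_bigr => p _; apply: eq_bigr => q _.
    rewrite lc_phipow mulr_sumr; apply: eq_bigr => k _.
    rewrite /F /cc /A mulrA; congr (_ * lc _ _).
    rewrite PoszD; ring.
  transitivity (\sum_(p < B.+1) \sum_(k < i.+1) \sum_(q < B.+1) F k p q).
    by apply: eq_bigr => p _; rewrite exchange_big.
  rewrite exchange_big; apply: eq_bigr => k _.
  rewrite (@diag _ (fun p q => F k p q)); last first.
    move=> p q hpq; rewrite /F /cc lc_lt ?mulr0 //.
    have hk : (k <= i)%N by rewrite -ltnS.
    have := @lowA_le _ phi i k hk; rewrite /A -ltz_nat in hpq *; lia.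
  apply: eq_bigr => n _; rewrite /w /Sk big_distrl; apply: eq_bigr => p _.
  by rewrite /F subnKC // -ltnS.
rewrite E1 big_ord_recr /= big1 ?add0r; last first.
  move=> k _; apply: big1 => n _.
  have hk : (widen_ord (leqnSn i) k < i)%N by rewrite /= ltn_ord.
  case: (eqVneq (w (widen_ord (leqnSn i) k) n) 0) => [->|hne]; first by rewrite mul0r.
  by exfalso; apply: (hmin _ hk); exists n.
have hAi := hpow i.
have hAi1 : (A i).1 <= i%:Z * v by apply: lc_nz; rewrite /A subnn hAi.2 expf_neq0.
have hlow := @lowA_le _ phi i i (leqnn i).
have hnsB : (ns < B.+1)%N.
  rewrite ltnS -lez_nat; rewrite /A in hAi1; rewrite /e in hB; lia.
rewrite (bigD1 (Ordinal hnsB)) //= big1 ?addr0; last first.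
  move=> n /eqP hn.
  have hn' : (n : nat) != ns by apply/eqP => e0; apply: hn; apply: val_inj.
  case: (ltngtP n ns) hn' => // hlt _.
    case: (eqVneq (w i n) 0) => [->|hne]; first by rewrite mul0r.
    by exfalso; apply: (hminn _ hlt).
  rewrite /cc /A subnn hAi.1 ?mulr0 // /e.
  rewrite -ltz_nat in hlt; lia.
rewrite /cc /A subnn.
have -> : e - 2%:Z * f.1 - ns%:Z + i%:Z = i%:Z * v by rewrite /e; ring.
by rewrite hAi.2 mulf_neq0 // expf_neq0.
Qed.
End Main.

End Helpers.

Theorem lemma2p7 (R : realType) (phi : LZ R[i]) :
  associate_add phi -> ~ lz_is_x phi ->
  forall f : LL R[i], LL_nonzero f ->
  exists (i : nat) (e : int), fsubst_coef phi f i e != 0.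
Proof.
exact: (@Helpers.main R phi).
Qed.
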